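(* Let $q$ be a prime power, $n \le m$, and let $\mathcal G(n,k)$ be a Gabidulin code of length $n$ and dimension $k$ over $\mathbb F_{q^m}$ with minimum rank distance $d = n-k+1$. Let $\tau < d$ and $\mathbf r \in \mathbb F_{q^m}^n$. Let $\mathbf c_1, \dots, \mathbf c_\ell$ be distinct codewords of $\mathcal G(n,k)$ with $\mathrm{rank}(\mathbf r - \mathbf c_i) \le \tau$ for all $i = 1,\dots,\ell$. Let $i \ne j$, $t_i = \mathrm{rank}(\mathbf r - \mathbf c_i)$, $t_j = \mathrm{rank}(\mathbf r - \mathbf c_j)$, with $\lfloor (d-1)/2 \rfloor < t_i, t_j \le \tau$. Then the row spaces $\mathcal R(\mathbf r - \mathbf c_i)$ and $\mathcal R(\mathbf r - \mathbf c_j)$ have no common subspace of dimension at least $t_i + t_j - d + 1$.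
   Context: A linearized polynomial over $\mathbb F_{q^m}$ is $f(x) = \sum_{i} f_i x^{q^i}$ with $f_i \in \mathbb F_{q^m}$; its $q$-degree is the largest $i$ with $f_i \neq 0$. The Gabidulin code $\mathcal G(n,k)$ is $\{(f(\alpha_0), \dots, f(\alpha_{n-1})) : \deg_q f < k\}$ for fixed $\alpha_0,\dots,\alpha_{n-1} \in \mathbb F_{q^m}$ linearly independent over $\mathbb F_q$. Fixing a basis of $\mathbb F_{q^m}$ over $\mathbb F_q$, each $\mathbf x \in \mathbb F_{q^m}^n$ corresponds to a matrix $\mathbf X \in \mathbb F_q^{m\times n}$; $\mathrm{rank}(\mathbf x)$ is the $\mathbb F_q$-rank of $\mathbf X$ and $\mathcal R(\mathbf x)$ is the row space of $\mathbf X$ over $\mathbb F_q$ (a subspace of $\mathbb F_q^n$). The minimum rank distance $d = \min\{\mathrm{rank}(\mathbf c) : \mathbf c \in \mathcal G(n,k), \mathbf c \ne 0\}$ equals $n-k+1$. *)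

(* Defs.v *)
From HB Require Import structures.
From mathcomp Require Import all_boot all_order all_algebra all_field.
Set Implicit Arguments. Unset Strict Implicit. Unset Printing Implicit Defensive.
Import GRing.Theory.
Local Open Scope ring_scope.

(* F = F_q (a finite field, so q = #|F| is a prime power);
   L = F_{q^m}, a field extension of F of degree m = \dim {:L}. *)

Definition lin_eval (F : finFieldType) (L : fieldExtType F) (k : nat)
  (f : 'I_k -> L) (a : L) : L :=
  \sum_(i < k) f i * a ^+ (#|F| ^ i)%N.

Definition gabidulin (F : finFieldType) (L : fieldExtType F) (n k : nat)
  (alpha : 'rV[L]_n) (c : 'rV[L]_n) : Prop :=
  exists f : 'I_k -> L, c = \row_j lin_eval f (alpha 0 j).

(* The m x n matrix over F of a vector x in L^n, w.r.t. the fixed basis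
   vbasis {:L} of L over F. *)
Definition mat_of (F : finFieldType) (L : fieldExtType F) (n : nat)
  (x : 'rV[L]_n) : 'M[F]_(\dim {:L}%VS, n) :=
  \matrix_(i, j) coord (vbasis fullv) i (x 0 j).

Definition rk (F : finFieldType) (L : fieldExtType F) (n : nat)
  (x : 'rV[L]_n) : nat := \rank (mat_of x).

(* Main.v *)
Require Import Defs.
From HB Require Import structures.
From mathcomp Require Import all_boot all_order all_algebra all_field.
From mathcomp Require Import fingroup pgroup abelian.
From mathcomp Require Import zify ring.
Set Implicit Arguments. Unset Strict Implicit. Unset Printing Implicit Defensive.
Import GRing.Theory.
Local Open Scope ring_scope.

Section Gab.
Variables (F : finFieldType) (L : fieldExtType F).
Local Notation q := #|F|.

Lemma pnat_q : [pchar L].-nat q.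
Proof.
have [p pr_p chp] := finPcharP F.
have := abelem_pgroup (fin_ring_pchar_abelem chp).
rewrite /pgroup cardsT => pq.
have chpL : p \in [pchar L] by rewrite (pchar_lalg L).
by rewrite (eq_pnat _ (pcharf_eq chpL)).
Qed.

Lemma frobD (x y : L) i : (x + y) ^+ (q ^ i) = x ^+ (q ^ i) + y ^+ (q ^ i).
Proof. by apply: exprDn_pchar; rewrite pnatX pnat_q. Qed.

Lemma expF (a : F) i : a ^+ (q ^ i) = a.
Proof. elim: i => [|i IH]; first by rewrite expn0 expr1.
by rewrite expnS exprM expf_card IH. Qed.

Lemma frobZ (a : F) (x : L) i : (a *: x) ^+ (q ^ i) = a *: x ^+ (q ^ i).
Proof. by rewrite exprZn expF. Qed.

Lemma lin_evalD k (f : 'I_k -> L) x y :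
  lin_eval f (x + y) = lin_eval f x + lin_eval f y.
Proof. rewrite /lin_eval -big_split; apply: eq_bigr => i _.
by rewrite frobD mulrDr. Qed.

Lemma lin_evalZ k (f : 'I_k -> L) (a : F) x :
  lin_eval f (a *: x) = a *: lin_eval f x.
Proof. rewrite /lin_eval scaler_sumr; apply: eq_bigr => i _.
by rewrite frobZ scalerAr. Qed.

Lemma lin_eval0 k (f : 'I_k -> L) : lin_eval f 0 = 0.
Proof. have h := lin_evalZ f 0 0; rewrite !scale0r in h; exact: h. Qed.

Lemma lin_evalB_fun k (f g : 'I_k -> L) a :
  lin_eval (fun i => f i - g i) a = lin_eval f a - lin_eval g a.
Proof. rewrite /lin_eval -sumrB; apply: eq_bigr => i _; by rewrite mulrBl. Qed.

Lemma lin_eval_sum k (f : 'I_k -> L) n (x : 'rV[F]_n) (v : 'I_n -> L) :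
  lin_eval f (\sum_j x 0 j *: v j) = \sum_j x 0 j *: lin_eval f (v j).
Proof.
rewrite (big_morph (lin_eval f) (@lin_evalD k f) (lin_eval0 f)).
by apply: eq_bigr => j _; exact: lin_evalZ.
Qed.

Definition lpoly k (f : 'I_k -> L) : {poly L} := \sum_(i < k) f i *: 'X^(q ^ i).

Lemma lpolyE k (f : 'I_k -> L) a : (lpoly f).[a] = lin_eval f a.
Proof. rewrite /lpoly horner_sum; apply: eq_bigr => i _.
by rewrite hornerZ hornerXn. Qed.

Lemma size_lpoly k (f : 'I_k -> L) : (0 < k)%N -> (size (lpoly f) <= (q ^ k.-1).+1)%N.
Proof.
move=> k0; rewrite /lpoly.
apply: (big_ind (fun p : {poly L} => (size p <= (q ^ k.-1).+1)%N)).
- by rewrite size_poly0.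
- move=> p1 p2 h1 h2; apply: leq_trans (size_polyD _ _) _; by rewrite geq_max h1 h2.
- move=> i _; apply: leq_trans (size_scale_leq _ _) _.
  rewrite size_polyXn ltnS leq_pexp2l ?(ltnW (finNzRing_gt1 F)) //.
  by rewrite -ltnS prednK.
Qed.

Lemma gab_key n k (alpha : 'rV[L]_n) (f : 'I_k -> L) :
  (0 < k)%N -> (k <= n)%N -> free [seq alpha 0 j | j <- enum 'I_n] ->
  \row_j lin_eval f (alpha 0 j) != 0 ->
  (n - k < rk (\row_j lin_eval f (alpha 0%R j)))%N.
Proof.
move=> k0 kn Hfree; set c := \row_j _ => cnz.
rewrite ltnNge; apply/negP => hrk.
set M := mat_of c.
set K := kermx M^T.
have rK : (k <= \rank K)%N.
  rewrite /K mxrank_ker mxrank_tr; move: hrk; rewrite /rk -/M; lia.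
set B := row_base K.
pose phi (x : 'rV[F]_n) := \sum_j x 0 j *: alpha 0 j.
have phi_inj : injective phi.
  move=> x y /eqP; rewrite -subr_eq0 => /eqP h.
  have h' : \sum_(j < n) (x - y) 0 j *: alpha 0 j = 0.
    apply: etrans h; rewrite /phi -sumrB; apply: eq_bigr => j _; by rewrite !mxE scalerBl.
  pose X := map_tuple (fun j => alpha 0 j) (ord_tuple n).
  have fX : free X.
    have -> : (X : seq L) = [seq alpha 0 j | j <- enum 'I_n] by rewrite -val_ord_tuple.
    exact: Hfree.
  have hX : \sum_(i < n) (x - y) 0 i *: X`_i = 0.
    apply: etrans h'; apply: eq_bigr => i _; congr (_ *: _).
    by rewrite (nth_map i) ?size_enum_ord ?nth_ord_enum //= val_ord_tuple size_enum_ord.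
  apply/rowP => j; apply/eqP; rewrite -subr_eq0; apply/eqP.
  have := (freeP fX) (fun j => (x - y) 0 j) hX j.
  by rewrite !mxE.
have phi0 : forall x, (x <= K)%MS -> lin_eval f (phi x) = 0.
  move=> x; rewrite sub_kermx => /eqP xM.
  rewrite /phi lin_eval_sum.
  set v := \sum_j _.
  rewrite (coord_vbasis (memvf v)); apply: big1 => i _.
  suff -> : coord (vbasis fullv) i v = 0 by rewrite scale0r.
  move/rowP: xM => /(_ i); rewrite !mxE => <-.
  rewrite /v linear_sum; apply: eq_bigr => j _.
  by rewrite linearZ /= !mxE.
set S := [seq phi (u *m B) | u : 'rV_(\rank K)].
have uS : uniq S.
  rewrite map_inj_uniq ?enum_uniq // => u w /phi_inj.
  exact: (row_free_inj (row_base_free K)).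
have sS : size S = (q ^ \rank K)%N by rewrite size_map -cardE card_mx mul1n.
have Pnz : lpoly f != 0.
  apply: contra cnz => /eqP P0; apply/eqP/rowP => j.
  by rewrite !mxE -lpolyE P0 horner0.
have rS : all (root (lpoly f)) S.
  apply/allP => z /mapP [u _ ->]; rewrite /root lpolyE phi0 //.
  by rewrite (submx_trans (submxMl u B)) // (eq_row_base K).
have := max_poly_roots Pnz rS uS; rewrite sS => hs.
have := leq_trans hs (size_lpoly f k0); rewrite ltnS => h.
have q1 := finNzRing_gt1 F.
have : (q ^ k <= q ^ k.-1)%N.
  by apply: leq_trans h; rewrite leq_pexp2l // ltnW.
by rewrite leq_exp2l //; lia.
Qed.

End Gab.

Theorem lemma1 (F : finFieldType) (L : fieldExtType F) (n k : nat)
  (alpha : 'rV[L]_n)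
  (Hnm : (n <= \dim {:L}%VS)%N)
  (Hk : (0 < k <= n)%N)
  (Halpha : free [seq alpha 0 j | j <- enum 'I_n])
  (tau : nat) (Htau : (tau < n - k + 1)%N)
  (r : 'rV[L]_n) (ell : nat) (c : 'I_ell -> 'rV[L]_n)
  (Hcode : forall i, gabidulin k alpha (c i))
  (Hdist : injective c)
  (Hrad : forall i, (rk (r - c i) <= tau)%N)
  (i j : 'I_ell) (Hij : i != j)
  (Hti : ((n - k + 1).-1./2 < rk (r - c i) <= tau)%N)
  (Htj : ((n - k + 1).-1./2 < rk (r - c j) <= tau)%N) :
  forall (p : nat) (U : 'M[F]_(p, n)),
    (U <= mat_of (r - c i))%MS -> (U <= mat_of (r - c j))%MS ->
    (\rank U < rk (r - c i) + rk (r - c j) - (n - k + 1) + 1)%N.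
Proof.
move=> p U sUi sUj.
have [fi ei] := Hcode i; have [fj ej] := Hcode j.
move/andP: Hk => [k0 kn].
set A := mat_of (r - c i); set B := mat_of (r - c j).
have cnz : c i - c j != 0.
  by rewrite subr_eq0; apply: contra Hij => /eqP/Hdist ->.
have ecw : c i - c j = \row_t lin_eval (fun s => fi s - fj s) (alpha 0 t).
  by apply/rowP => t; rewrite ei ej !mxE lin_evalB_fun.
have := @gab_key _ _ n k alpha (fun s => fi s - fj s) k0 kn Halpha.
rewrite -ecw => /(_ cnz).
have emat : mat_of (c i - c j) = B - A.
  apply/matrixP => a b; rewrite !mxE -linearB /=; congr (coord _ _ _).
  rewrite ?mxE; ring.
rewrite /rk emat => hd.
have h1 : (\rank (B - A)%R <= \rank (A + B)%MS)%N.
  apply: mxrankS; rewrite addrC; apply: addmx_sub_adds.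
    by rewrite ((eqmx_opp A).2 _ A).1 submx_refl.
  exact: submx_refl.
have h2 := mxrank_sum_cap A B.
have h3 : (\rank U <= \rank (A :&: B)%MS)%N.
  by apply: mxrankS; rewrite sub_capmx sUi sUj.
move: h1 h2 h3 hd; rewrite -/A -/B.
move: (\rank U) (\rank A) (\rank B) (\rank (B - A)%R) (\rank (A + B)%MS) (\rank (A :&: B)%MS).
move=> a b1 b2 d s t; clear; lia.
Qed.
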